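(* For all $\tau\in[-1,1)$, $P_u(\tau)>0$.
   Context: $P_u(\tau)=\sum_{k=0}^{22}c_k\tau^k$ with $(c_0,\dots,c_{22})=\bigl(\tfrac{335867}{539062},\tfrac{419712}{989125},-\tfrac{352463}{3539236},\tfrac{60789}{1703279},-\tfrac{132842}{11825541},\tfrac{43961}{54574472},\tfrac{39599}{12036926},-\tfrac{213665}{48625258},\tfrac{61644}{14973337},-\tfrac{107283}{33444500},\tfrac{44761}{18892011},-\tfrac{28249}{13550715},\tfrac{20641}{14839893},\tfrac{13459}{92774551},-\tfrac{4992}{34838093},-\tfrac{11771}{8149937},\tfrac{24115}{27631671},\tfrac{42106}{39550107},-\tfrac{21163}{32637441},-\tfrac{9782}{15918509},\tfrac{11581}{32652169},\tfrac{14692}{88640147},-\tfrac{12278}{123249611}\bigr)$. *)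

(* Defs.v *)
From Stdlib Require Import Reals List.
Import ListNotations.
Open Scope R_scope.

Definition Pu_coeffs : list R :=
  [ 335867/539062; 419712/989125; -(352463/3539236); 60789/1703279;
    -(132842/11825541); 43961/54574472; 39599/12036926; -(213665/48625258);
    61644/14973337; -(107283/33444500); 44761/18892011; -(28249/13550715);
    20641/14839893; 13459/92774551; -(4992/34838093); -(11771/8149937);
    24115/27631671; 42106/39550107; -(21163/32637441); -(9782/15918509);
    11581/32652169; 14692/88640147; -(12278/123249611) ].

(* P_u(tau) = sum_{k=0}^{22} c_k tau^k  (sum_f_R0 f 22 has 23 terms). *)
Definition P_u (tau : R) : R :=
  sum_f_R0 (fun k => nth k Pu_coeffs 0 * tau ^ k) 22.

(* Main.v *)
Require Import Defs.
From Stdlib Require Import Reals Lra.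
Open Scope R_scope.

Lemma powb : forall t n, -1 <= t <= 1 -> -1 <= t ^ n <= 1.
Proof.
  intros t n H. induction n as [|n IH]; simpl; [lra|].
  assert (Ha : Rabs (t * t ^ n) <= 1).
  { rewrite Rabs_mult. assert (Rabs t <= 1) by (apply Rabs_le; lra).
    assert (Rabs (t^n) <= 1) by (apply Rabs_le; lra).
    assert (0 <= Rabs t) by apply Rabs_pos. assert (0 <= Rabs (t^n)) by apply Rabs_pos.
    nra. }
  unfold Rabs in Ha; destruct (Rcase_abs (t * t ^ n)); lra.
Qed.

Lemma term : forall c x, -1 <= x <= 1 -> c * x >= - Rabs c.
Proof.
  intros c x H. destruct (Rle_dec 0 c).
  - rewrite Rabs_right by lra. nra.
  - rewrite Rabs_left by lra. nra.
Qed.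

Theorem lemma5p2 : forall tau : R, -1 <= tau < 1 -> P_u tau > 0.
Proof.
  intros tau H. assert (Ht : -1 <= tau <= 1) by lra.
  unfold P_u, Pu_coeffs. cbn [sum_f_R0 List.nth]. rewrite pow_O, Rmult_1_r.
  repeat match goal with
  | |- context [?c * tau ^ ?k] =>
      let h := fresh "h" in
      assert (h := term c (tau ^ k) (powb tau k Ht));
      set (tau ^ k) in *
  end.
  repeat match goal with
  | h : _ >= - Rabs ?c |- _ =>
      first [ rewrite (Rabs_right c) in h by lra | rewrite (Rabs_left c) in h by lra ]
  end.
  lra.
Qed.
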